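(* Let $f:[0,1]\to\mathbb{R}$ be bounded and let $0<a<1$. Assume that $f(t)=c$ for all $t\in(a,1]$, for some real constant $c$. Then for every $n\in\mathbb{N}$ and every $x\in(a,1)$, \[ |B_nf(x)-f(x)|\leq \|f-c\|\,e^{-nr(x,a)}. \]
   Context: For a bounded function $f:[0,1]\to\mathbb{R}$, $\|f\|=\sup_{t\in[0,1]}|f(t)|$, and $\|f-c\|$ is the supremum norm of $t\mapsto f(t)-c$. The $n$th Bernstein polynomial of $f$ is $B_nf(x)=\sum_{j=0}^n f(j/n)\binom{n}{j}x^j(1-x)^{n-j}$, $x\in[0,1]$. For $x,\theta\in(0,1)$, $r(x,\theta)=\theta\log\frac{\theta}{x}+(1-\theta)\log\frac{1-\theta}{1-x}$. *)

(* Defs.v *)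
From Stdlib Require Import Reals Lra.
From Coquelicot Require Import Coquelicot.
Open Scope R_scope.

Definition bernstein (n : nat) (f : R -> R) (x : R) : R :=
  sum_f_R0 (fun j => f (INR j / INR n) * Binomial.C n j * x ^ j * (1 - x) ^ (n - j)) n.

(* sup-norm on [0,1] of t |-> f t - c, as the (finite, for bounded f) supremum *)
Definition supnorm_shift (f : R -> R) (c : R) : R :=
  real (Lub_Rbar (fun y => exists t, 0 <= t <= 1 /\ y = Rabs (f t - c))).

Definition rfun (x theta : R) : R :=
  theta * ln (theta / x) + (1 - theta) * ln ((1 - theta) / (1 - x)).

(* Main.v *)
Require Import Defs.
From Stdlib Require Import Reals Lra Lia.
From Coquelicot Require Import Coquelicot.
Open Scope R_scope.

Lemma exp_pow_nat (y : R) (k : nat) : exp y ^ k = exp (INR k * y).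
Proof.
  induction k as [|k IH].
  - simpl. rewrite Rmult_0_l, exp_0. reflexivity.
  - rewrite S_INR. simpl. rewrite IH, <- exp_plus. f_equal. ring.
Qed.

Lemma C_nonneg (n j : nat) : 0 <= Binomial.C n j.
Proof.
  unfold Binomial.C. apply Rmult_le_pos.
  - apply pos_INR.
  - left. apply Rinv_0_lt_compat. apply Rmult_lt_0_compat;
    apply INR_fact_lt_0.
Qed.

Lemma sup_bound (f : R -> R) (c : R)
  (Hbdd : exists M, forall t, 0 <= t <= 1 -> Rabs (f t) <= M) :
  forall t, 0 <= t <= 1 -> Rabs (f t - c) <= supnorm_shift f c.
Proof.
  destruct Hbdd as [M HM].
  unfold supnorm_shift.
  set (E := fun y => exists t, 0 <= t <= 1 /\ y = Rabs (f t - c)).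
  destruct (Lub_Rbar_correct E) as [Hub Hlub].
  assert (Hub2 : is_ub_Rbar E (M + Rabs c)).
  { intros y [t [Ht ->]].
    simpl. eapply Rle_trans. apply Rabs_triang.
    rewrite Rabs_Ropp. specialize (HM t Ht). lra. }
  specialize (Hlub _ Hub2).
  intros t Ht.
  assert (Et : E (Rabs (f t - c))) by (exists t; split; auto).
  specialize (Hub _ Et).
  destruct (Lub_Rbar E) as [r| |]; simpl in *; try contradiction.
  exact Hub.
Qed.

Theorem corollary2 (f : R -> R) (a c : R)
  (Hbdd : exists M, forall t, 0 <= t <= 1 -> Rabs (f t) <= M)
  (Ha : 0 < a < 1)
  (Hc : forall t, a < t <= 1 -> f t = c) :
  forall (n : nat) (x : R), a < x < 1 ->
    Rabs (bernstein n f x - f x) <= supnorm_shift f c * exp (- INR n * rfun x a).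
Proof.
  intros n x Hx.
  set (S := supnorm_shift f c).
  assert (HS : forall t, 0 <= t <= 1 -> Rabs (f t - c) <= S)
    by (apply sup_bound; exact Hbdd).
  assert (HS0 : 0 <= S).
  { eapply Rle_trans. apply Rabs_pos. apply (HS 0). lra. }
  set (p := fun j => Binomial.C n j * x ^ j * (1 - x) ^ (n - j)).
  assert (Hp0 : forall j, 0 <= p j).
  { intro j. unfold p. apply Rmult_le_pos; [apply Rmult_le_pos|].
    apply C_nonneg. apply pow_le; lra. apply pow_le; lra. }
  assert (Hsum1 : sum_f_R0 p n = 1).
  { unfold p. rewrite <- binomial. replace (x + (1 - x)) with 1 by ring.
    apply pow1. }
  assert (Hdiff : bernstein n f x - f x
                  = sum_f_R0 (fun j => (f (INR j / INR n) - c) * p j) n).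
  { rewrite (Hc x) by lra. unfold bernstein.
    match goal with |- ?A - c = _ => replace (A - c) with (A - c * sum_f_R0 p n) by (rewrite Hsum1; ring) end.
    rewrite scal_sum, <- minus_sum.
    apply sum_eq. intros j _. unfold p. ring. }
  set (lam := ln x + ln (1 - a) - ln a - ln (1 - x)).
  assert (Hlam : 0 <= lam).
  { unfold lam.
    assert (ln a < ln x) by (apply ln_increasing; lra).
    assert (ln (1 - x) < ln (1 - a)) by (apply ln_increasing; lra).
    lra. }
  set (q := exp (- lam)).
  assert (Hq : q = a * (1 - x) / (x * (1 - a))).
  { unfold q, lam.
    replace (- (ln x + ln (1 - a) - ln a - ln (1 - x)))
      with (ln a + ln (1 - x) + - ln x + - ln (1 - a)) by ring.
    rewrite !exp_plus, !exp_Ropp, !exp_ln by lra. field. split; lra. }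
  set (Y := (1 - x) / (1 - a)).
  assert (HY : x * q + (1 - x) = Y).
  { rewrite Hq. unfold Y. field. split; lra. }
  rewrite Hdiff.
  eapply Rle_trans. apply sum_f_R0_triangle.
  eapply Rle_trans.
  { apply (sum_Rle _ (fun j => S * exp (lam * INR n * a) *
             (Binomial.C n j * (x * q) ^ j * (1 - x) ^ (n - j)))).
    intros j Hj.
    rewrite Rabs_mult, (Rabs_right (p j)) by (apply Rle_ge; apply Hp0).
    assert (Hj01 : 0 <= INR j / INR n <= 1 /\ (INR j / INR n <= a -> INR j <= INR n * a)).
    { destruct n as [|n'].
      - assert (j = 0%nat) by lia. subst j. simpl.
        unfold Rdiv. rewrite Rmult_0_l. lra.
      - assert (Hn : 0 < INR (Datatypes.S n')) by (apply lt_0_INR; lia).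
        assert (HjI : INR j <= INR (Datatypes.S n')) by (apply le_INR; exact Hj).
        assert (0 <= INR j) by apply pos_INR.
        split; [split|].
        + apply Rmult_le_pos; [lra|]. left; apply Rinv_0_lt_compat; lra.
        + apply Rmult_le_reg_r with (INR (Datatypes.S n')); [lra|].
          unfold Rdiv. rewrite Rmult_assoc, Rinv_l by lra. lra.
        + intro Hd. apply Rmult_le_compat_l with (r := INR (Datatypes.S n')) in Hd; [|lra].
          replace (INR (Datatypes.S n') * (INR j / INR (Datatypes.S n'))) with (INR j) in Hd
            by (field; lra). lra. }
    destruct Hj01 as [Hj01 Hjle].
    assert (Hrhs : 0 <= S * exp (lam * INR n * a) *
             (Binomial.C n j * (x * q) ^ j * (1 - x) ^ (n - j))).
    { apply Rmult_le_pos; [apply Rmult_le_pos; [assumption|left; apply exp_pos]|].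
      apply Rmult_le_pos; [apply Rmult_le_pos|].
      apply C_nonneg.
      apply pow_le. apply Rmult_le_pos; [lra|left; apply exp_pos].
      apply pow_le; lra. }
    destruct (Rle_or_lt (INR j / INR n) a) as [Hle|Hgt].
    + specialize (Hjle Hle).
      rewrite Rpow_mult_distr. unfold q. rewrite exp_pow_nat.
      assert (He : 1 <= exp (lam * INR n * a) * exp (INR j * - lam)).
      { rewrite <- exp_plus. rewrite <- exp_0. destruct (Req_dec (lam * INR n * a + INR j * - lam) 0) as [E|E].
        rewrite E; lra. left. apply exp_increasing.
        assert (0 <= lam * (INR n * a - INR j)) by (apply Rmult_le_pos; lra). lra. }
      assert (Hf := HS _ Hj01).
      apply Rle_trans with (S * p j).
      { apply Rmult_le_compat_r; [apply Hp0|exact Hf]. }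
      replace (S * exp (lam * INR n * a) *
                 (Binomial.C n j * (x ^ j * exp (INR j * - lam)) * (1 - x) ^ (n - j)))
        with ((S * p j) * (exp (lam * INR n * a) * exp (INR j * - lam)))
        by (unfold p; ring).
      rewrite <- (Rmult_1_r (S * p j)) at 1.
      apply Rmult_le_compat_l; [apply Rmult_le_pos; [exact HS0|apply Hp0]|exact He].
    + rewrite (Hc (INR j / INR n)) by lra.
      rewrite Rminus_diag, Rabs_R0, Rmult_0_l. exact Hrhs. }
  replace (sum_f_R0 (fun j => S * exp (lam * INR n * a) *
             (Binomial.C n j * (x * q) ^ j * (1 - x) ^ (n - j))) n)
    with (S * exp (lam * INR n * a) * sum_f_R0 (fun j =>
             (Binomial.C n j * (x * q) ^ j * (1 - x) ^ (n - j))) n)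
    by (rewrite scal_sum; apply sum_eq; intros; ring).
  replace (sum_f_R0 (fun i => Binomial.C n i * (x * q) ^ i * (1 - x) ^ (n - i)) n)
    with (Y ^ n) by (rewrite <- HY; apply binomial).
  rewrite Rmult_assoc. apply Rmult_le_compat_l; [exact HS0|].
  right.
  rewrite <- (exp_ln Y) by (unfold Y; apply Rdiv_lt_0_compat; lra).
  rewrite exp_pow_nat, <- exp_plus. f_equal.
  unfold Y, rfun, lam. rewrite !ln_div by lra. ring.
Qed.
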